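(* Let $4\le p\le n-1$ and let $j\in\{1,\dots,n-1\}$ be an internal node. The degree constraint $x(\delta^+(j))\le 1$ is valid for $P^p_{0,n}(D)$ and defines a facet of $P^p_{0,n}(D)$.
   Context: Let $n$ be a positive integer, $V=\{0,1,\dots,n\}$, and let $D=(V,A)$ be the digraph whose arc set $A$ consists of all ordered pairs $(i,j)$ with $i\neq j$, $i,j\in V$, except that no arc enters node $0$, no arc leaves node $n$, and the arc $(0,n)$ is absent. Nodes $1,\dots,n-1$ are internal nodes. A $(0,n)$-$p$-path is a simple directed path in $D$ from $0$ to $n$ with exactly $p$ arcs. $P^p_{0,n}(D)\subseteq\mathbb{R}^A$ is the convex hull of the incidence vectors of all $(0,n)$-$p$-paths. For $F\subseteq A$, $x(F)=\sum_{(i,j)\in F}x_{ij}$; $\delta^+(k)$ ($\delta^-(k)$) is the set of arcs of $A$ leaving (entering) node $k$. Facet defining means valid and defining a face of dimension $\dim P^p_{0,n}(D)-1$. *)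

(* Defs.v *)
From mathcomp Require Import all_boot all_order all_algebra.

Import Order.TTheory GRing.Theory Num.Theory.
Local Open Scope ring_scope.

(* Nodes V = {0,...,n} are 'I_n.+1; node 0 is ord0, node n is ord_max. *)
Notation node n := (ordinal n.+1).

Definition is_arc (n : nat) (e : node n * node n) : bool :=
  [&& e.1 != e.2, e.2 != ord0, e.1 != ord_max & e != (ord0, ord_max)].

Definition arc (n : nat) := {e : 'I_n.+1 * 'I_n.+1 | is_arc n e}.

Notation vecA R n := {ffun arc n -> R}.

Definition is_pn_path (n p : nat) (s : seq (node n)) : bool :=
  [&& size s == p.+1, head ord0 s == ord0, last ord0 s == ord_max, uniq s &
      path (fun i j => is_arc n (i, j)) (head ord0 s) (behead s)].

Definition incid (R : realFieldType) (n : nat) (s : seq (node n)) : vecA R n :=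
  [ffun e : arc n => if val e \in zip s (behead s) then 1 else 0].

Definition in_Pp (R : realFieldType) (n p : nat) (x : vecA R n) : Prop :=
  exists l : seq (R * seq (node n)),
    [/\ all (fun c => 0 <= c.1) l,
        \sum_(c <- l) c.1 = 1,
        all (fun c => is_pn_path n p c.2) l &
        forall e, x e = \sum_(c <- l) c.1 * incid R n c.2 e].

Definition x_out (R : realFieldType) (n : nat) (x : vecA R n) (k : node n) : R :=
  \sum_(e : arc n | (val e).1 == k) x e.

Definition aff_indep (R : realFieldType) (n k : nat) (y : 'I_k.+1 -> vecA R n) : Prop :=
  forall c : 'I_k.+1 -> R,
    \sum_i c i = 0 -> (forall e, \sum_i c i * y i e = 0) -> forall i, c i = 0.

Definition has_dim (R : realFieldType) (n : nat) (S : vecA R n -> Prop) (d : nat) : Prop :=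
  (exists y : 'I_d.+1 -> vecA R n, (forall i, S (y i)) /\ aff_indep R n d y) /\
  (forall y : 'I_d.+2 -> vecA R n, (forall i, S (y i)) -> ~ aff_indep R n d.+1 y).

(* Main.v *)
Require Import Defs.
From mathcomp Require Import all_boot all_order all_algebra.
From mathcomp Require Import ring lra zify.
From Stdlib Require Import Classical.
Import Order.TTheory GRing.Theory Num.Theory.
Local Open Scope ring_scope.
Set Implicit Arguments. Unset Strict Implicit. Unset Printing Implicit Defensive.
Notation darc := Defs.arc.


Definition NA (n : nat) := #|{: darc n}|.
Definition tv (R : realFieldType) (n : nat) (x : vecA R n) : 'rV[R]_(NA n) :=
  \row_i x (enum_val i).

Lemma tvE (R : realFieldType) n (x : vecA R n) e : tv x 0 (enum_rank e) = x e.
Proof. by rewrite /tv mxE enum_rankK. Qed.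

Lemma dep_lemma (R : realFieldType) (n k m : nat) (B : 'M[R]_(m, NA n))
  (y : 'I_k.+2 -> vecA R n) :
  (m <= k)%N -> (forall i, (tv (y i) - tv (y ord0) <= B)%MS) ->
  ~ aff_indep R n k.+1 y.
Proof.
move=> hm hB hind.
pose D : 'M[R]_(k.+1, NA n) := \matrix_(i < k.+1) (tv (y (lift ord0 i)) - tv (y ord0)).
have hD : (D <= B)%MS.
  apply/row_subP => i; rewrite rowK; exact: hB.
have hr : (\rank D <= k)%N.
  apply: leq_trans (mxrankS hD) _; exact: leq_trans (rank_leq_row B) hm.
have : kermx D != 0.
  apply/negP => /eqP h0.
  have := mxrank_ker D; rewrite h0 mxrank0 => /esym/eqP; rewrite subn_eq0.
  by move=> h; have := leq_trans h hr; rewrite ltnn.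
move=> hnz.
have : ~~ (kermx D <= (0 : 'M[R]_(1, k.+1)))%MS.
  by apply/negP => /submx0null h1; move/eqP: hnz; rewrite h1.
case/row_subPn => r hr0; have {hr0} hr0 : row r (kermx D) != 0 by apply: contra hr0 => /eqP ->; rewrite sub0mx.
set d := row r (kermx D).
have hdD : d *m D = 0 by rewrite /d -row_mul mulmx_ker row0.
pose c (i : 'I_k.+2) := if unlift ord0 i is Some i' then d 0 i' else - \sum_(i' < k.+1) d 0 i'.
have cL (i : 'I_k.+1) : c (lift ord0 i) = d 0 i by rewrite /c liftK.
have c0 : c ord0 = - \sum_(i' < k.+1) d 0 i' by rewrite /c unlift_none.
have := hind c.
have hsum : \sum_i c i = 0.
  by rewrite big_ord_recl c0 (eq_bigr _ (fun i _ => cL i)) addNr.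
have hlin : forall e, \sum_i c i * y i e = 0.
  move=> e; rewrite big_ord_recl c0 (eq_bigr (fun i => d 0 i * y (lift ord0 i) e) (fun i _ => congr1 (fun t => t * _) (cL i))).
  have := congr1 (fun M : 'M[R]_(1, NA n) => M 0 (enum_rank e)) hdD; rewrite !mxE => h; apply: etrans h.
  rewrite mulNr big_distrl /= -sumrN -big_split /=; apply: eq_bigr => i _.
  have -> : D i (enum_rank e) = y (lift ord0 i) e - y ord0 e by rewrite /D !mxE !enum_rankK.
  ring.
move=> /(_ hsum hlin) hc.
have : d == 0.
  apply/eqP/rowP => i; move: (hc (lift ord0 i)); rewrite cL => ->; by rewrite mxE.
move=> /eqP hd; move: hr0; by rewrite -/d hd eqxx.
Qed.


Fixpoint wt (T : Type) (R : realFieldType) (f : T -> T -> R) (x : T) (s : seq T) : R :=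
  if s is y :: s' then f x y + wt f y s' else 0.

Lemma wt_cat (T : Type) (R : realFieldType) (f : T -> T -> R) x s1 s2 :
  wt f x (s1 ++ s2) = wt f x s1 + wt f (last x s1) s2.
Proof. by elim: s1 x => [|y s1 IH] x /=; [rewrite add0r | rewrite IH addrA]. Qed.

Definition W (T : Type) (R : realFieldType) (f : T -> T -> R) (z0 zn : T) (mid : seq T) := wt f z0 (rcons mid zn).

Lemma W_cat (T : Type) (R : realFieldType) (f : T -> T -> R) z0 zn s1 s2 :
  W f z0 zn (s1 ++ s2) = wt f z0 s1 + wt f (last z0 s1) (rcons s2 zn).
Proof. by rewrite /W rcons_cat wt_cat. Qed.

Lemma FL (T : Type) (R : realFieldType) (f : T -> T -> R) z0 zn L1 c d L2 X Y (j : T) :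
  W f z0 zn ((L1 ++ c :: d :: L2) ++ X) - W f z0 zn ((L1 ++ c :: d :: L2) ++ Y) =
  W f z0 zn ((L1 ++ j :: d :: L2) ++ X) - W f z0 zn ((L1 ++ j :: d :: L2) ++ Y).
Proof. rewrite !W_cat !last_cat /=; ring. Qed.

Lemma FR (T : Type) (R : realFieldType) (f : T -> T -> R) z0 zn X Y r R1 c R2 (j : T) :
  W f z0 zn (X ++ r :: R1 ++ c :: R2) - W f z0 zn (Y ++ r :: R1 ++ c :: R2) =
  W f z0 zn (X ++ r :: R1 ++ j :: R2) - W f z0 zn (Y ++ r :: R1 ++ j :: R2).
Proof.
have e : forall S (c : T), S ++ r :: R1 ++ c :: R2 = (S ++ r :: R1) ++ c :: R2.
  by move=> S c'; rewrite -catA.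
rewrite !e !W_cat !last_cat /=; ring.
Qed.

Definition aval (T : eqType) (I : pred T) (j : T) (m : nat) (s : seq T) :=
  [&& uniq s, all (fun v => I v && (v != j)) s & size s == m].
Definition jval (T : eqType) (I : pred T) (j : T) (m : nat) (s : seq T) :=
  [&& uniq s, all I s, size s == m & j \in s].

Lemma aval_j (T : eqType) (I : pred T) j m A c B :
  I j -> aval I j m (A ++ c :: B) -> jval I j m (A ++ j :: B).
Proof.
move=> Ij /and3P [hu ha hs].
have hnj : j \notin A ++ B.
  apply/negP => hin; move/allP: ha => /(_ j); rewrite mem_cat inE.
  move: hin; rewrite mem_cat => /orP [h|h]; rewrite h ?orbT => /(_ isT) /andP [_];
  by rewrite eqxx.
apply/and4P; split.
- rewrite -cat1s uniq_catCA /= hnj /=.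
  by move: hu; rewrite -cat1s uniq_catCA /= => /andP [].
- move: ha; rewrite !all_cat /= Ij => /and3P [h1 _ h3].
  by rewrite (sub_all _ h1) ?(sub_all _ h3) // => v /andP [].
- by move: hs; rewrite !size_cat.
- by rewrite mem_cat inE eqxx orbT.
Qed.


Ltac prep := repeat match goal with
 | H : is_true (_ && _) |- _ => case/andP: H => ? ?
 | H : is_true (~~ (_ || _)) |- _ => rewrite negb_or in H
 | H : is_true (~~ (_ \in _)) |- _ => rewrite !inE in H
 end.
Ltac bsolve := repeat first [ done | (rewrite eq_sym; done) | apply/andP; split | rewrite negb_or].
Ltac jsolve := rewrite /jval /= !inE ?eqxx ?orbT ?andbT; bsolve.

Lemma sp_rep3 (T : eqType) (R : realFieldType) (f : T -> T -> R) z0 zn (I : pred T) j a b c x :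
  uniq [:: a; b; c; x; j] -> all I [:: a; b; c; x; j] ->
  (forall s t, jval I j 3 s -> jval I j 3 t -> W f z0 zn s = W f z0 zn t) ->
  W f z0 zn [:: a; b; c] = W f z0 zn [:: a; x; c].
Proof.
move=> hu hI H; move: hu hI; rewrite /= !inE => hu hI; prep.
have E s : jval I j 3 s -> W f z0 zn s = W f z0 zn [:: a; b; j].
  by move=> hs; apply: H => //; jsolve.
have e1 := E [:: a; x; j] ltac:(jsolve).
have e2 := E [:: b; c; j] ltac:(jsolve).
have e3 := E [:: b; j; a] ltac:(jsolve).
have e4 := E [:: x; c; j] ltac:(jsolve).
have e5 := E [:: x; j; a] ltac:(jsolve).
move: e1 e2 e3 e4 e5; rewrite /W /= => *; lra.
Qed.

Lemma sp_swap3a (T : eqType) (R : realFieldType) (f : T -> T -> R) z0 zn (I : pred T) j a b c :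
  uniq [:: a; b; c; j] -> all I [:: a; b; c; j] ->
  (forall s t, jval I j 3 s -> jval I j 3 t -> W f z0 zn s = W f z0 zn t) ->
  W f z0 zn [:: a; b; c] = W f z0 zn [:: b; a; c].
Proof.
move=> hu hI H; move: hu hI; rewrite /= !inE => hu hI; prep.
have E s : jval I j 3 s -> W f z0 zn s = W f z0 zn [:: a; b; j].
  by move=> hs; apply: H => //; jsolve.
have e1 := E [:: a; c; j] ltac:(jsolve).
have e2 := E [:: a; j; c] ltac:(jsolve).
have e3 := E [:: b; a; j] ltac:(jsolve).
have e4 := E [:: b; c; j] ltac:(jsolve).
have e5 := E [:: b; j; c] ltac:(jsolve).
move: e1 e2 e3 e4 e5; rewrite /W /= => *; lra.
Qed.

Lemma sp_swap3b (T : eqType) (R : realFieldType) (f : T -> T -> R) z0 zn (I : pred T) j a b c :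
  uniq [:: a; b; c; j] -> all I [:: a; b; c; j] ->
  (forall s t, jval I j 3 s -> jval I j 3 t -> W f z0 zn s = W f z0 zn t) ->
  W f z0 zn [:: a; b; c] = W f z0 zn [:: a; c; b].
Proof.
move=> hu hI H; move: hu hI; rewrite /= !inE => hu hI; prep.
have E s : jval I j 3 s -> W f z0 zn s = W f z0 zn [:: a; b; j].
  by move=> hs; apply: H => //; jsolve.
have e1 := E [:: a; c; j] ltac:(jsolve).
have e2 := E [:: b; c; j] ltac:(jsolve).
have e3 := E [:: b; j; a] ltac:(jsolve).
have e4 := E [:: c; b; j] ltac:(jsolve).
have e5 := E [:: c; j; a] ltac:(jsolve).
have e6 := E [:: j; a; b] ltac:(jsolve).
have e7 := E [:: j; a; c] ltac:(jsolve).
move: e1 e2 e3 e4 e5 e6 e7; rewrite /W /= => *; lra.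
Qed.

Lemma sp_swap4 (T : eqType) (R : realFieldType) (f : T -> T -> R) z0 zn (I : pred T) j a b c d :
  uniq [:: a; b; c; d; j] -> all I [:: a; b; c; d; j] ->
  (forall s t, jval I j 4 s -> jval I j 4 t -> W f z0 zn s = W f z0 zn t) ->
  W f z0 zn [:: a; b; c; d] = W f z0 zn [:: a; c; b; d].
Proof.
move=> hu hI H; move: hu hI; rewrite /= !inE => hu hI; prep.
have E s : jval I j 4 s -> W f z0 zn s = W f z0 zn [:: a; b; c; j].
  by move=> hs; apply: H => //; jsolve.
have e1 := E [:: a; b; d; j] ltac:(jsolve).
have e2 := E [:: a; b; j; d] ltac:(jsolve).
have e3 := E [:: a; c; b; j] ltac:(jsolve).
have e4 := E [:: a; c; d; j] ltac:(jsolve).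
have e5 := E [:: a; c; j; d] ltac:(jsolve).
move: e1 e2 e3 e4 e5; rewrite /W /= => *; lra.
Qed.


Lemma FL' (T : Type) (R : realFieldType) (f : T -> T -> R) z0 zn L1 c d X Y (j : T) :
  W f z0 zn (L1 ++ c :: d :: X) - W f z0 zn (L1 ++ c :: d :: Y) =
  W f z0 zn (L1 ++ j :: d :: X) - W f z0 zn (L1 ++ j :: d :: Y).
Proof. have := FL f z0 zn L1 c d [::] X Y j; by rewrite -!catA. Qed.

Lemma FR' (T : Type) (R : realFieldType) (f : T -> T -> R) z0 zn X Y r c R2 (j : T) :
  W f z0 zn (X ++ r :: c :: R2) - W f z0 zn (Y ++ r :: c :: R2) =
  W f z0 zn (X ++ r :: j :: R2) - W f z0 zn (Y ++ r :: j :: R2).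
Proof. exact: (FR f z0 zn X Y r [::] c R2 j). Qed.

Lemma split_last2 (T : Type) (L : seq T) : (1 < size L)%N -> exists L1 c d, L = L1 ++ [:: c; d].
Proof.
case/lastP: L => [|L d] //; case/lastP: L => [|L c] // _; exists L, c, d.
by rewrite -!cats1 -catA.
Qed.

Lemma aval_perm (T : eqType) (I : pred T) j m s t : perm_eq s t -> aval I j m s = aval I j m t.
Proof. by move=> h; rewrite /aval (perm_uniq h) (perm_all _ h) (perm_size h). Qed.

Lemma perm_sw (T : eqType) (L Rr : seq T) a b : perm_eq (L ++ a :: b :: Rr) (L ++ b :: a :: Rr).
Proof. rewrite perm_cat2l; apply/permP => q /=; by rewrite addnCA. Qed.

Definition HypJ (T : eqType) (R : realFieldType) (f : T -> T -> R) z0 zn (I : pred T) j m :=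
  forall s t, jval I j m s -> jval I j m t -> W f z0 zn s = W f z0 zn t.

Lemma from_diff (R : realFieldType) (a b c d : R) : a - b = c - d -> c = d -> a = b.
Proof. move=> h e; move: h; rewrite e subrr => /eqP; by rewrite subr_eq0 => /eqP. Qed.

Lemma rep_move (T : eqType) (R : realFieldType) (f : T -> T -> R) z0 zn (I : pred T) j m :
  (3 <= m)%N -> I j -> HypJ f z0 zn I j m ->
  forall L a x Rr, aval I j m (L ++ a :: Rr) -> aval I j m (L ++ x :: Rr) ->
  W f z0 zn (L ++ a :: Rr) = W f z0 zn (L ++ x :: Rr).
Proof.
move=> hm Ij H L a x Rr hA hX.
case: (eqVneq x a) => [-> //|hxa].
have hs : (size L + size Rr).+1 = m.
  by move: hA => /and3P [_ _ /eqP]; rewrite size_cat /= addnS.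
case: (ltnP 1 (size L)) => hL.
  case: (split_last2 hL) => L1 [c [d eL]]; subst L.
  move: hA hX; rewrite -!catA /= => hA hX.
  apply: (from_diff (FL' f z0 zn L1 c d (a :: Rr) (x :: Rr) j)).
  by apply: H; apply: (aval_j Ij); [exact: hA | exact: hX].
case: (ltnP 1 (size Rr)) => hR.
  case: Rr hs hA hX hR => [|r [|c R2]] //= hs hA hX _.
  have e : forall (S : seq T) (u : T), S ++ r :: u :: R2 = (S ++ [:: r]) ++ u :: R2.
    by move=> S u; rewrite -catA.
  have e2 : forall (S : seq T) (u : T), S ++ u :: r :: c :: R2 = (S ++ [:: u]) ++ r :: c :: R2.
    by move=> S u; rewrite -catA.
  rewrite !e2; apply: (from_diff (FR' f z0 zn _ _ r c R2 j)).
  rewrite !e; apply: H; apply: (aval_j (c := c) Ij); by rewrite -!catA.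
have h1 : size L = 1%N by lia.
have h2 : size Rr = 1%N by lia.
have hm3 : m = 3%N by lia.
clear hs; subst m.
case: L hL hA hX h1 => [|l [|? ?]] //= _ hA hX _.
case: Rr hR hA hX h2 => [|r [|? ?]] //= _ hA hX _.
apply: (sp_rep3 (I := I) (j := j)) => //.
  move: hA hX; rewrite /aval /= !inE => hA hX; prep.
  rewrite /= ?inE; bsolve.
move: hA hX; rewrite /aval /= !inE => hA hX; prep.
rewrite /= Ij; bsolve.
Qed.

Lemma swp_move (T : eqType) (R : realFieldType) (f : T -> T -> R) z0 zn (I : pred T) j m :
  (3 <= m)%N -> I j -> HypJ f z0 zn I j m ->
  forall L a b Rr, aval I j m (L ++ a :: b :: Rr) ->
  W f z0 zn (L ++ a :: b :: Rr) = W f z0 zn (L ++ b :: a :: Rr).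
Proof.
move=> hm Ij H L a b Rr hA.
have hB : aval I j m (L ++ b :: a :: Rr) by rewrite -(aval_perm _ _ _ (perm_sw L Rr a b)).
have hs : (size L + size Rr).+2 = m.
  by move: hA => /and3P [_ _ /eqP]; rewrite size_cat /= !addnS.
case: (ltnP 1 (size L)) => hL.
  case: (split_last2 hL) => L1 [c [d eL]]; subst L.
  move: hA hB; rewrite -!catA /= => hA hB.
  apply: (from_diff (FL' f z0 zn L1 c d (a :: b :: Rr) (b :: a :: Rr) j)).
  by apply: H; apply: (aval_j Ij); [exact: hA | exact: hB].
case: (ltnP 1 (size Rr)) => hR.
  case: Rr hs hA hB hR => [|r [|c R2]] //= hs hA hB _.
  have e : forall (S : seq T) (u : T), S ++ r :: u :: R2 = (S ++ [:: r]) ++ u :: R2.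
    by move=> S u; rewrite -catA.
  have e2 : forall (S : seq T) (u v : T), S ++ u :: v :: r :: c :: R2 = (S ++ [:: u; v]) ++ r :: c :: R2.
    by move=> S u v; rewrite -catA.
  rewrite !e2; apply: (from_diff (FR' f z0 zn _ _ r c R2 j)).
  rewrite !e; apply: H; apply: (aval_j (c := c) Ij); by rewrite -!catA.
have hm' : (1 <= size L + size Rr)%N by lia.
case: L hL hA hB hs hm' => [|l [|? ?]] //= _ hA hB hs hm'.
  case: Rr hR hA hB hs hm' => [|r [|? ?]] //= _ hA hB hs _.
  subst m.
  apply: (sp_swap3a (I := I) (j := j)) => //.
    move: hA; rewrite /aval /= !inE => hA; prep.
    rewrite /= ?inE; bsolve.
  move: hA; rewrite /aval /= !inE => hA; prep.
  rewrite /= Ij; bsolve.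
case: Rr hR hA hB hs hm' => [|r [|? ?]] //= _ hA hB hs _.
  subst m.
  apply: (sp_swap3b (I := I) (j := j)) => //.
    move: hA; rewrite /aval /= !inE => hA; prep.
    rewrite /= ?inE; bsolve.
  move: hA; rewrite /aval /= !inE => hA; prep.
  rewrite /= Ij; bsolve.
subst m.
apply: (sp_swap4 (I := I) (j := j)) => //.
  move: hA; rewrite /aval /= !inE => hA; prep.
  rewrite /= ?inE; bsolve.
move: hA; rewrite /aval /= !inE => hA; prep.
rewrite /= Ij; bsolve.
Qed.

Ltac permsolve := apply/permP => ?; rewrite ?count_cat /= ?count_cat /=; lia.

Lemma bubble (T : eqType) (R : realFieldType) (f : T -> T -> R) z0 zn (I : pred T) j m :
  (3 <= m)%N -> I j -> HypJ f z0 zn I j m ->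
  forall M L Rr b, aval I j m (L ++ M ++ b :: Rr) ->
  W f z0 zn (L ++ M ++ b :: Rr) = W f z0 zn (L ++ b :: M ++ Rr).
Proof.
move=> hm Ij H; elim/last_ind => [|M c IH] L Rr b hA //.
have e1 : L ++ rcons M c ++ b :: Rr = (L ++ M) ++ c :: b :: Rr by rewrite -cats1 -!catA.
rewrite e1 (swp_move hm Ij H); last by rewrite -e1.
have e2 : (L ++ M) ++ b :: c :: Rr = L ++ M ++ b :: (c :: Rr) by rewrite -catA.
rewrite e2 IH; first by rewrite cat_rcons.
rewrite -e2 -(aval_perm _ _ _ (perm_sw (L ++ M) Rr c b)) -e1; exact: hA.
Qed.

Lemma conn (T : eqType) (R : realFieldType) (f : T -> T -> R) z0 zn (I : pred T) j m :
  (3 <= m)%N -> I j -> HypJ f z0 zn I j m ->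
  forall s t, aval I j m s -> aval I j m t -> W f z0 zn s = W f z0 zn t.
Proof.
move=> hm Ij H.
suff: forall k L s t, size s = k -> aval I j m (L ++ s) -> aval I j m (L ++ t) ->
  W f z0 zn (L ++ s) = W f z0 zn (L ++ t).
  by move=> gen s t hs ht; apply: (gen _ [::] s t erefl).
have sz : forall L s t, aval I j m (L ++ s) -> aval I j m (L ++ t) -> size s = size t.
  move=> L s t /and3P [_ _ /eqP h1] /and3P [_ _ /eqP h2]; move: h1 h2; rewrite !size_cat; lia.
elim => [|k IH] L s t hs hA hB.
  have := sz _ _ _ hA hB; rewrite hs; case: s hs hA {hB} => // _ _; by case: t.
case: s hs hA hB => [|a s'] //= [hs] hA hB.
have := sz _ _ _ hA hB; case: t hB => [|b t'] //= hB [ht].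
case: (eqVneq a b) => [eab|nab].
  subst b; rewrite -!cat_rcons; apply: IH => //; by rewrite cat_rcons.
case: (boolP (b \in s')) => hb.
  case/splitPr: hb hA hs => M Rr hA hs.
  rewrite (bubble (M := a :: M) hm Ij H) //.
  have := IH (rcons L b) (a :: M ++ Rr) t'; rewrite !cat_rcons; apply.
  - by move: hs; rewrite /= !size_cat /= => <-; rewrite addnS.
  - rewrite (aval_perm _ _ _ (_ : perm_eq _ (L ++ a :: M ++ b :: Rr))) //.
    permsolve.
  - done.
have hX : aval I j m (L ++ b :: s').
  move: hA hB => /and3P [hu1 ha1 hs1] /and3P [hu2 ha2 hs2].
  apply/and3P; split.
  - rewrite -cat1s uniq_catCA /= mem_cat negb_or hb andbT.
    move: hu1; rewrite -cat1s uniq_catCA /= => /andP [_ ->].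
    move: hu2; rewrite -cat1s uniq_catCA /= mem_cat negb_or => /andP [/andP [-> _] _].
    done.
  - move: ha1 ha2; rewrite !all_cat /= => /and3P [-> _ ->] /and3P [_ -> _]; done.
  - by move: hs1; rewrite !size_cat.
rewrite (rep_move hm Ij H hA hX) -!cat_rcons; apply: IH => //; by rewrite cat_rcons.
Qed.


Definition l2 (R : realFieldType) n (lam : darc n -> R) (pr : 'I_n.+1 * 'I_n.+1) : R :=
  if insub pr is Some e then lam e else 0.
Definition l2c (R : realFieldType) n (lam : darc n -> R) (u v : 'I_n.+1) : R := l2 lam (u, v).
Definition dotA (R : realFieldType) n (lam : darc n -> R) (x : vecA R n) : R :=
  \sum_e lam e * x e.

Lemma sum_incid (R : realFieldType) n (lam : darc n -> R) (Z : seq ('I_n.+1 * 'I_n.+1)) :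
  uniq Z -> all (is_arc n) Z ->
  \sum_(e : darc n) lam e * (if val e \in Z then 1 else 0) = \sum_(pr <- Z) l2 lam pr.
Proof.
elim: Z => [|pr Z IH] /=.
  by move=> _ _; rewrite big_nil big1 // => e _; rewrite ?in_nil mulr0.
move=> /andP [hnin hu] /andP [ha hall]; rewrite big_cons -IH //.
rewrite (eq_bigr (fun e : darc n => lam e * (if val e == pr then 1 else 0) +
                    lam e * (if val e \in Z then 1 else 0))); last first.
  move=> e _; rewrite inE -[sval e]/(val e); case: (val e =P pr) => [->|_] /=.
    by rewrite (negbTE hnin) mulr0 addr0 mulr1.
  by rewrite mulr0 add0r.
rewrite big_split /=; congr (_ + _).
rewrite (bigD1 (Sub pr ha)) //= ?SubK eqxx mulr1 big1 ?addr0.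
  by rewrite /l2 (insubT _ ha).
move=> e hne; case: eqP => [he|_]; last by rewrite mulr0.
by move: hne; rewrite (_ : e = Sub pr ha) ?eqxx //; apply: val_inj; rewrite /= -he.
Qed.

Lemma sum_zip_wt (R : realFieldType) n (lam : darc n -> R) x t :
  \sum_(pr <- zip (x :: t) t) l2 lam pr = wt (l2c lam) x t.
Proof.
elim: t x => [|y t IH] x /=; first by rewrite big_nil.
by rewrite big_cons IH.
Qed.

Lemma path_all_zip (T : Type) (r : T -> T -> bool) x t :
  path r x t -> all (fun pr => r pr.1 pr.2) (zip (x :: t) t).
Proof. by elim: t x => [|y t IH] x //= /andP [-> /IH]. Qed.

Lemma dot_incid (R : realFieldType) n p (lam : darc n -> R) t :
  is_pn_path n p (ord0 :: t) -> dotA lam (incid R n (ord0 :: t)) = wt (l2c lam) ord0 t.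
Proof.
case/and5P => _ _ _ hu hp.
rewrite /dotA -sum_zip_wt -sum_incid //=.
- by apply: eq_bigr => e _; rewrite ffunE.
- exact: zip_uniql.
- exact: (path_all_zip hp).
Qed.

Definition indj (R : realFieldType) n (j : 'I_n.+1) (e : darc n) : R :=
  if (val e).1 == j then 1 else 0.

Lemma x_out_dot (R : realFieldType) n (x : vecA R n) j : x_out R n x j = dotA (indj R j) x.
Proof.
rewrite /x_out /dotA big_mkcond /=; apply: eq_bigr => e _.
by rewrite /indj; case: ifP; rewrite ?mul1r ?mul0r.
Qed.

Lemma wt_indj (R : realFieldType) n (j : 'I_n.+1) x t :
  path (fun a b => is_arc n (a, b)) x t ->
  wt (l2c (indj R j)) x t = (count (pred1 j) (belast x t))%:R.
Proof.
elim: t x => [|y t IH] x //= /andP [ha hp].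
rewrite IH // /l2c /l2 (insubT _ ha) /indj /= natrD; congr (_ + _).
by case: (x == j).
Qed.

Definition internal n (v : 'I_n.+1) := (v != ord0) && (v != ord_max).
Definition mk n (mid : seq 'I_n.+1) := ord0 :: rcons mid ord_max.
Definition valid n p (mid : seq 'I_n.+1) := [&& uniq mid, all (@internal n) mid & size mid == p.-1].

Lemma path_arcs n (x : 'I_n.+1) mid : (0 < n)%N ->
  uniq (x :: rcons mid ord_max) -> x != ord_max -> all (@internal n) mid -> (x != ord0) || (mid != [::]) ->
  path (fun a b => is_arc n (a, b)) x (rcons mid ord_max).
Proof.
move=> n0; elim: mid x => [|y mid IH] x /=.
  rewrite !inE andbT orbF => hxm _ _ hx0; rewrite /is_arc /= hxm andbT.
  apply/and3P; split => //.
    by apply/eqP => /(congr1 val) /= h; move: n0; rewrite h.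
  apply: contra hx0; by case/eqP => ->.
move=> /andP [hx hu] hxm /andP [/andP [hy0 hym] hall] _.
apply/andP; split.
  rewrite /is_arc /= hy0 hxm /=; apply/andP; split.
    by apply: contra hx => /eqP ->; rewrite inE eqxx.
  by apply: contra hym => /eqP [_ ->].
by apply: IH => //; rewrite hy0.
Qed.

Lemma mk_path n p mid : (0 < n)%N -> (1 < p)%N -> valid p mid -> is_pn_path n p (mk mid).
Proof.
move=> n0 p1 /and3P [hu ha /eqP hs].
have h0m : (ord0 : 'I_n.+1) != ord_max by apply/eqP => /(congr1 val) /= h; move: n0; rewrite -h.
have h0 : (ord0 : 'I_n.+1) \notin mid.
  by apply/negP => h; move/allP: ha => /(_ _ h) /andP [/eqP].
have hm : (ord_max : 'I_n.+1) \notin mid.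
  by apply/negP => h; move/allP: ha => /(_ _ h) /andP [_ /eqP].
have hU : uniq (mk mid) by rewrite /mk /= mem_rcons inE negb_or h0m h0 rcons_uniq hm hu.
apply/and5P; split => //.
- by rewrite /mk /= size_rcons hs; apply/eqP; lia.
- by rewrite /mk /= last_rcons.
- apply: path_arcs => //.
  by rewrite orbC; case: (mid) hs => //= hs; lia.
Qed.

Lemma path_mk n p s : (0 < n)%N -> is_pn_path n p s -> exists mid, s = mk mid /\ valid p mid.
Proof.
move=> n0; case/and5P => hs hh hl hu hp.
case: s hs hh hl hu hp => [|x t] //= hs /eqP hx hl hu hp; subst x.
case/lastP: t hs hl hu hp => [|mid y] hs hl hu hp.
  by move: hl => /= /eqP /(congr1 val) /= h; move: n0; rewrite -h.
move: hl; rewrite last_rcons => /eqP hy; subst y.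
exists mid; split => //.
move: hu => /= /andP [h0 hu]; move: hu; rewrite rcons_uniq => /andP [hm hu].
apply/and3P; split => //.
  apply/allP => v hv; apply/andP; split.
    by apply: contra h0 => /eqP <-; rewrite mem_rcons inE hv orbT.
  by apply: contra hm => /eqP <-.
by move: hs; rewrite size_rcons => /eqP [<-].
Qed.

Lemma x_out_mk (R : realFieldType) n p (j : 'I_n.+1) mid : (0 < n)%N -> (1 < p)%N -> j != ord0 ->
  valid p mid -> x_out R n (incid R n (mk mid)) j = if j \in mid then 1 else 0.
Proof.
move=> n0 p1 j0 hv.
have hP := mk_path n0 p1 hv.
rewrite x_out_dot /mk (dot_incid (p := p)) //.
move: hP => /and5P [_ _ _ _ hp].
rewrite wt_indj // belast_rcons /= count_uniq_mem; last by case/and3P: hv.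
by rewrite eq_sym (negbTE j0) add0n; case: (j \in mid).
Qed.

Lemma comb_concrete (R : realFieldType) n p (j : 'I_n.+1) (lam : darc n -> R) :
  (0 < n)%N -> (4 <= p)%N -> internal j ->
  (forall s t, is_pn_path n p s -> is_pn_path n p t -> j \in s -> j \in t ->
     dotA lam (incid R n s) = dotA lam (incid R n t)) ->
  forall s t, is_pn_path n p s -> is_pn_path n p t -> j \notin s -> j \notin t ->
     dotA lam (incid R n s) = dotA lam (incid R n t).
Proof.
move=> n0 p4 Ij H s t hs ht js jt.
have p1 : (1 < p)%N by lia.
case: (path_mk n0 hs) => ms [es vs]; case: (path_mk n0 ht) => mt [et vt]; subst s t.
rewrite /mk !(dot_incid (p := p)) -?/(mk _); try exact: mk_path.
have cv : forall mid, valid p mid -> j \notin mk mid -> aval (@internal n) j p.-1 mid.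
  move=> mid /and3P [hu ha hsz] hj; apply/and3P; split => //.
  apply/allP => v hv; apply/andP; split; first by move/allP: ha; apply.
  by apply: contra hj => /eqP <-; rewrite /mk inE mem_rcons inE hv !orbT.
apply: (conn (m := p.-1) (I := @internal n) (j := j)) => //; try by apply: cv.
  by lia.
move=> u v /and4P [hu ha hsz hj] /and4P [hu' ha' hsz' hj'].
have vu : valid p u by apply/and3P.
have vv : valid p v by apply/and3P.
have := H _ _ (mk_path n0 p1 vu) (mk_path n0 p1 vv).
rewrite /mk !inE !mem_rcons !inE hj hj' !orbT => /(_ isT isT).
by rewrite !(dot_incid (p := p)) //; [exact: (mk_path n0 p1 vv) | exact: (mk_path n0 p1 vu)].
Qed.


Lemma dot_comb (R : realFieldType) n (lam : darc n -> R) (x : vecA R n) (l : seq (R * seq 'I_n.+1)) :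
  (forall e, x e = \sum_(c <- l) c.1 * incid R n c.2 e) ->
  dotA lam x = \sum_(c <- l) c.1 * dotA lam (incid R n c.2).
Proof.
move=> hx; rewrite /dotA (eq_bigr (fun e => \sum_(c <- l) lam e * (c.1 * incid R n c.2 e))); last first.
  by move=> e _; rewrite hx big_distrr.
rewrite exchange_big /=; apply: eq_bigr => c _; rewrite big_distrr /=.
by apply: eq_bigr => e _; ring.
Qed.

Lemma dot_tv (R : realFieldType) n (x : vecA R n) (C : 'M[R]_(NA n, NA n)) c :
  (tv x *m C) 0 c = dotA (fun e => C (enum_rank e) c) x.
Proof.
rewrite mxE /dotA (reindex (@enum_rank _)); last by apply: onW_bij; exact: enum_rank_bij.
by apply: eq_bigr => e _; rewrite tvE mulrC.
Qed.

Lemma tvB (R : realFieldType) n (x y : vecA R n) : tv x - tv y = tv [ffun e => x e - y e].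
Proof. by apply/rowP => i; rewrite !mxE ffunE. Qed.

Lemma inP_sub (R : realFieldType) n p m (B : 'M[R]_(m, NA n)) (y0 x : vecA R n) :
  (forall s, is_pn_path n p s -> (tv (incid R n s) - tv y0 <= B)%MS) ->
  in_Pp R n p x -> (tv x - tv y0 <= B)%MS.
Proof.
move=> hs [l [h0 h1 h2 h3]].
have -> : tv x - tv y0 = \sum_(c <- l) c.1 *: (tv (incid R n c.2) - tv y0).
  apply/rowP => i; rewrite !mxE h3 summxE.
  have -> : y0 (enum_val i) = \sum_(c <- l) c.1 * y0 (enum_val i) by rewrite -big_distrl /= h1 mul1r.
  rewrite -sumrB; apply: eq_bigr => c _; rewrite !mxE; ring.
rewrite big_seq; apply: summx_sub => c hc; apply: scalemx_sub.
by apply: hs; move/allP: h2; apply.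
Qed.

Lemma mem_mk n (j : 'I_n.+1) mid : internal j -> (j \in mk mid) = (j \in mid).
Proof.
case/andP => j0 jm; rewrite /mk inE mem_rcons inE (negbTE j0) (negbTE jm) /=.
done.
Qed.

Lemma xout_path (R : realFieldType) n p (j : 'I_n.+1) s : (0 < n)%N -> (1 < p)%N -> internal j ->
  is_pn_path n p s -> x_out R n (incid R n s) j = if j \in s then 1 else 0.
Proof.
move=> n0 p1 Ij hs; case: (path_mk n0 hs) => mid [-> hv].
rewrite (x_out_mk R n0 p1 _ hv) ?mem_mk //; by case/andP: Ij.
Qed.

Lemma valid_ineq (R : realFieldType) n p (j : 'I_n.+1) x : (0 < n)%N -> (1 < p)%N -> internal j ->
  in_Pp R n p x -> x_out R n x j <= 1.
Proof.
move=> n0 p1 Ij [l [h0 h1 h2 h3]].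
rewrite x_out_dot (dot_comb _ h3) -h1 big_seq [X in _ <= X]big_seq; apply: ler_sum => c hc.
rewrite -x_out_dot (xout_path R n0 p1 Ij); last by move/allP: h2; apply.
by case: ifP; rewrite ?mulr1 ?mulr0 //; move/allP: h0 => /(_ _ hc).
Qed.

Lemma path_in_P (R : realFieldType) n p s : is_pn_path n p s -> in_Pp R n p (incid R n s).
Proof.
move=> hs; exists [:: (1, s)]; split => /=.
- by rewrite ler01.
- by rewrite big_cons big_nil addr0.
- by rewrite hs.
- by move=> e; rewrite big_cons big_nil addr0 mul1r.
Qed.

Lemma exist_paths n p (j : 'I_n.+1) : (4 <= p)%N -> (p <= n - 1)%N -> (0 < j)%N -> (j < n)%N ->
  (exists s, is_pn_path n p s /\ j \notin s) /\ (exists s, is_pn_path n p s /\ j \in s).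
Proof.
move=> p4 pn j0 jn.
have n0 : (0 < n)%N by lia.
have p1 : (1 < p)%N by lia.
have Ij : internal j.
  apply/andP; split; apply/eqP => /(congr1 val) /=; lia.
pose g (i : nat) := if (i < j)%N then i else i.+1.
pose zm : seq 'I_n.+1 := [seq inord (g i) | i <- iota 1 p.-1].
have gval : forall v, v \in zm -> exists2 i, (0 < i < p)%N & nat_of_ord v = g i.
  move=> v /mapP [i hi ->]; rewrite mem_iota in hi.
  exists i; first by lia.
  by rewrite inordK // /g; case: ifP; lia.
have hzm_int : all (@internal n) zm.
  apply/allP => v /gval [i hi hv]; apply/andP; split; apply/eqP => /(congr1 (@nat_of_ord _)) /=;
  rewrite hv /g; case: ifP; lia.
have hzj : j \notin zm.
  by apply/negP => /gval [i hi]; rewrite /g; case: ifP; lia.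
have hzu : uniq zm.
  have hm : map (@nat_of_ord _) zm = map g (iota 1 p.-1).
    rewrite -map_comp; apply/eq_in_map => i; rewrite mem_iota /= => hi.
    by rewrite inordK // /g; case: ifP; lia.
  rewrite -(map_inj_uniq (@ord_inj _)) hm map_inj_uniq ?iota_uniq //.
  by move=> a b; rewrite /g; case: ifP; case: ifP; lia.
have hzs : size zm = p.-1 by rewrite size_map size_iota.
have vz : valid p zm by rewrite /valid hzu hzm_int hzs eqxx.
split.
  exists (mk zm); split; first exact: mk_path.
  by rewrite mem_mk.
exists (mk (j :: behead zm)); split; last by rewrite mem_mk // inE eqxx.
apply: mk_path => //.
rewrite /valid /=; apply/and3P; split.
- apply/andP; split.
    by apply: contra hzj; case: (zm) => //= a t h; rewrite inE h orbT.
  by case: (zm) hzu => //= a t /andP [].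
- rewrite Ij /=; by case: (zm) hzm_int => //= a t /andP [].
- by case: (zm) hzs => //= [|a t]; lia.
Qed.

Definition B0 (R : realFieldType) n k (y : 'I_k.+1 -> vecA R n) : 'M[R]_(k, NA n) :=
  \matrix_(i < k) (tv (y (lift ord0 i)) - tv (y ord0)).

Lemma rowsB0 (R : realFieldType) n k (y : 'I_k.+1 -> vecA R n) i :
  (tv (y i) - tv (y ord0) <= B0 y)%MS.
Proof.
case: (unliftP ord0 i) => [i'|] ->; last by rewrite subrr sub0mx.
by apply: (eq_row_sub i'); rewrite rowK.
Qed.

Definition ext (R : realFieldType) n k (y : 'I_k.+1 -> vecA R n) (w : vecA R n) (i : 'I_k.+2) :=
  if unlift ord_max i is Some i' then y i' else w.

Lemma ext_lift (R : realFieldType) n k (y : 'I_k.+1 -> vecA R n) w i : ext y w (lift ord_max i) = y i.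
Proof. by rewrite /ext liftK. Qed.
Lemma ext_max (R : realFieldType) n k (y : 'I_k.+1 -> vecA R n) w : ext y w ord_max = w.
Proof. by rewrite /ext unlift_none. Qed.
Lemma ext_0 (R : realFieldType) n k (y : 'I_k.+1 -> vecA R n) w : ext y w ord0 = y ord0.
Proof.
rewrite (_ : ord0 = lift ord_max ord0) ?ext_lift //; apply: val_inj => /=.
by rewrite /bump /=.
Qed.

Lemma sum_ext (R : realFieldType) k (F : 'I_k.+2 -> R) :
  \sum_i F i = \sum_(i < k.+1) F (lift ord_max i) + F ord_max.
Proof.
rewrite big_ord_recr /=; congr (_ + _); apply: eq_bigr => i _; congr F.
by apply: val_inj; rewrite /= /bump /=; move: (ltn_ord i); rewrite ltnNge => /negbTE ->.
Qed.

Lemma single_indep (R : realFieldType) n (y : 'I_1 -> vecA R n) : aff_indep R n 0 y.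
Proof. move=> c hs _ i; by move: hs; rewrite big_ord1 (ord1 i). Qed.

Lemma dep_bound (R : realFieldType) n m (y : 'I_m.+1 -> vecA R n) : aff_indep R n m y -> (m <= NA n)%N.
Proof.
case: m y => [|k] y hi //; rewrite leqNgt; apply/negP => hk.
apply: (dep_lemma (B := 1%:M)) hi => //; last by move=> i; exact: submx1.
Qed.

Lemma ext_indep (R : realFieldType) n k (j : 'I_n.+1) (y : 'I_k.+1 -> vecA R n) w :
  aff_indep R n k y -> (forall i, x_out R n (y i) j = 1) -> x_out R n w j = 0 ->
  aff_indep R n k.+1 (ext y w).
Proof.
move=> hind hy hw c hs hl.
have hx : \sum_i c i * x_out R n (ext y w i) j = 0.
  rewrite (eq_bigr (fun i => \sum_e c i * (indj R j e * ext y w i e))); last first.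
    by move=> i _; rewrite x_out_dot /dotA big_distrr.
  rewrite exchange_big /= big1 // => e _.
  rewrite (eq_bigr (fun i => indj R j e * (c i * ext y w i e))); last by move=> i _; ring.
  by rewrite -big_distrr /= hl mulr0.
rewrite sum_ext ext_max hw mulr0 addr0 in hx.
rewrite (eq_bigr (fun i => c (lift ord_max i))) in hx; last by move=> i _; rewrite ext_lift hy mulr1.
move: hs; rewrite sum_ext hx add0r => hcm.
have hl' : forall e, \sum_(i < k.+1) c (lift ord_max i) * y i e = 0.
  move=> e; move: (hl e); rewrite sum_ext hcm mul0r addr0 => h; apply: etrans h.
  by apply: eq_bigr => i _; rewrite ext_lift.
have h0 := hind (fun i => c (lift ord_max i)) hx hl'.
by move=> i; case: (unliftP ord_max i) => [i'|] ->; [exact: h0 | exact: hcm].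
Qed.

Lemma max_sub (R : realFieldType) n k (y : 'I_k.+1 -> vecA R n) w :
  aff_indep R n k y -> ~ aff_indep R n k.+1 (ext y w) ->
  (tv w - tv (y ord0) <= B0 y)%MS.
Proof.
move=> hind hni.
have [c [hs [hl [i0 hi0]]]] : exists c : 'I_k.+2 -> R, \sum_i c i = 0 /\
    (forall e, \sum_i c i * ext y w i e = 0) /\ exists i, c i <> 0.
  apply: NNPP => hne; apply: hni => c hs hl i; apply: NNPP => hci.
  by apply: hne; exists c; split => //; split => //; exists i.
set cm := c ord_max.
have hcm : cm != 0.
  apply/eqP => hcm.
  have hs' : \sum_(i < k.+1) c (lift ord_max i) = 0 by move: hs; rewrite sum_ext -/cm hcm addr0.
  have hl' : forall e, \sum_(i < k.+1) c (lift ord_max i) * y i e = 0.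
    move=> e; move: (hl e); rewrite sum_ext -/cm hcm mul0r addr0 => h; apply: etrans h.
    by apply: eq_bigr => i _; rewrite ext_lift.
  have h0 := hind _ hs' hl'.
  by apply: hi0; case: (unliftP ord_max i0) => [i'|] ->; [exact: h0 | exact: hcm].
have -> : tv w - tv (y ord0) =
    \sum_(i < k.+1) (- c (lift ord_max i) / cm) *: (tv (y i) - tv (y ord0)).
  apply/rowP => t; rewrite !mxE summxE.
  set e := enum_val t.
  have hA := hl e; rewrite sum_ext ext_max -/cm in hA.
  have hS := hs; rewrite sum_ext -/cm in hS.
  rewrite (eq_bigr (fun i : 'I_k.+1 => (-1 / cm) * (c (lift ord_max i) * y i e) +
                         (1 / cm * y ord0 e) * c (lift ord_max i))); last first.
    by move=> i _; rewrite !mxE; field.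
  rewrite big_split /= -!mulr_sumr.
  rewrite (eq_bigr (fun i : 'I_k.+1 => c (lift ord_max i) * y i e)) in hA; last first.
    by move=> i _; rewrite ext_lift.
  have hA' : \sum_(i < k.+1) c (lift ord_max i) * y i e = - (cm * w e).
    by apply/eqP; rewrite -addr_eq0 hA.
  have hS' : \sum_(i < k.+1) c (lift ord_max i) = - cm by apply/eqP; rewrite -addr_eq0 hS.
  rewrite hA' hS'; field; exact: hcm.
apply: summx_sub => i _; apply: scalemx_sub; exact: rowsB0.
Qed.

Lemma sub_dot (R : realFieldType) n m (B : 'M[R]_(m, NA n)) (x y : vecA R n) c :
  (tv x - tv y <= B)%MS ->
  dotA (fun e => cokermx B (enum_rank e) c) x = dotA (fun e => cokermx B (enum_rank e) c) y.
Proof.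
rewrite submxE => /eqP h.
have := congr1 (fun M : 'rV[R]_(NA n) => M 0 c) h.
have sp : forall (A B : 'rV[R]_(NA n)), (A - B) 0 c = A 0 c - B 0 c.
  by move=> A B'; rewrite !mxE.
rewrite mulmxBl /= sp !dot_tv mxE => /eqP; rewrite subr_eq0 => /eqP.
done.
Qed.

Theorem theorem11 (R : realFieldType) (n p : nat) (j : 'I_n.+1) :
  (4 <= p)%N -> (p <= n - 1)%N -> (0 < j)%N -> (j < n)%N ->
  (forall x : vecA R n, in_Pp R n p x -> x_out R n x j <= 1) /\
  (exists d : nat,
     has_dim R n (fun x : vecA R n => in_Pp R n p x) d.+1 /\
     has_dim R n (fun x : vecA R n => in_Pp R n p x /\ x_out R n x j = 1) d).
Proof.
move=> p4 pn j0 jn.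
have n0 : (0 < n)%N by lia.
have p1 : (1 < p)%N by lia.
have Ij : internal j by apply/andP; split; apply/eqP => /(congr1 (@nat_of_ord _)) /=; lia.
split; first by move=> x hx; exact: (valid_ineq n0 p1 Ij hx).
have [[sz [hsz jsz]] [sj [hsj jsj]]] := exist_paths p4 pn j0 jn.
pose Fp := fun x : vecA R n => in_Pp R n p x /\ x_out R n x j = 1.
have Fpath : forall s, is_pn_path n p s -> j \in s -> Fp (incid R n s).
  by move=> s hs hjs; split; [exact: path_in_P | rewrite (xout_path R n0 p1 Ij hs) hjs].
pose PF m := exists y : 'I_m.+1 -> vecA R n, (forall i, Fp (y i)) /\ aff_indep R n m y.
have PF0 : PF 0%N.
  by exists (fun _ => incid R n sj); split; [move=> _; exact: Fpath | exact: single_indep].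
have [k [[y [hF hind]] hnot]] : exists k, PF k /\ ~ PF k.+1.
  apply: NNPP => hne.
  have hall : forall m, PF m.
    elim => // m IH; apply: NNPP => hm; apply: hne; by exists m.
  case: (hall (NA n).+1) => y' [_ /dep_bound]; by rewrite ltnn.
exists k; split; last first.
  split; first by exists y.
  by move=> y' hy' hi; apply: hnot; exists y'.
set z := incid R n sz.
have hzP : in_Pp R n p z by exact: path_in_P.
have hz0 : x_out R n z j = 0 by rewrite (xout_path R n0 p1 Ij hsz) (negbTE jsz).
have hextP : forall i, in_Pp R n p (ext y z i).
  by move=> i; case: (unliftP ord_max i) => [i'|] ->;
    [rewrite ext_lift; exact: (hF i').1 | rewrite ext_max].
split.
  exists (ext y z); split => //.
  by apply: (ext_indep hind _ hz0) => i; exact: (hF i).2.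
pose y' := ext y z.
have hB0 : (B0 y <= B0 y')%MS.
  apply/row_subP => i; rewrite rowK.
  by have := rowsB0 y' (lift ord_max (lift ord0 i)); rewrite /y' ext_lift ext_0.
have hFsub : forall w, Fp w -> (tv w - tv (y ord0) <= B0 y)%MS.
  move=> w hw; apply: (max_sub hind) => hi; apply: hnot; exists (ext y w); split => //.
  by move=> i; case: (unliftP ord_max i) => [i'|] ->; [rewrite ext_lift | rewrite ext_max].
have hall : forall x, in_Pp R n p x -> (tv x - tv (y ord0) <= B0 y')%MS.
  move=> x; apply: inP_sub => s hs.
  case: (boolP (j \in s)) => hjs.
    exact: submx_trans (hFsub _ (Fpath _ hs hjs)) hB0.
  have -> : tv (incid R n s) - tv (y ord0) =
      (tv (incid R n s) - tv z) + (tv z - tv (y ord0)) by rewrite addrA subrK.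
  apply: addmx_sub; last by have := rowsB0 y' ord_max; rewrite /y' ext_max ext_0.
  apply: submx_trans hB0.
  rewrite submxE; apply/eqP/rowP => c.
  have sp : forall (A B : 'rV[R]_(NA n)), (A - B) 0 c = A 0 c - B 0 c.
    by move=> A B'; rewrite !mxE.
  rewrite mulmxBl sp !dot_tv [RHS]mxE; apply/eqP; rewrite subr_eq0; apply/eqP.
  apply: (comb_concrete n0 p4 Ij) => //.
  move=> u v hu hv hju hjv.
  rewrite (sub_dot c (hFsub _ (Fpath _ hu hju))).
  by rewrite (sub_dot c (hFsub _ (Fpath _ hv hjv))).
move=> y'' hy''.
apply: (dep_lemma (B := B0 y')) => // i.
have -> : tv (y'' i) - tv (y'' ord0) =
    (tv (y'' i) - tv (y ord0)) + (-1) *: (tv (y'' ord0) - tv (y ord0)).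
  by rewrite scaleN1r opprB addrA subrK.
by apply: addmx_sub; [|apply: scalemx_sub]; apply: hall.
Qed.
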